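(* Let $g$ be a smooth function of one variable and consider, on the loop space of smooth maps $u:S^1\to\mathbb{R}$, the Poisson bivectors of hydrodynamic type $\omega_1=\delta'(x-y)$ and $\omega_2=g(u)\delta'(x-y)+\frac12 g'(u)u_x\delta(x-y)$. If the pencil $\omega_2-\lambda\omega_1$ is exact, i.e. there exists a local evolutionary vector field $X$ with $\mathrm{Lie}_X\omega_1=0$ and $\mathrm{Lie}_X\omega_2=\omega_1$, then there are constants $a,b$ such that $g(u)=au+b$, i.e. the pencil has the form $$(au+b)\delta'(x-y)+\frac12 a u_x\delta(x-y)-\lambda\delta'(x-y).$$
   Context: Scalar case ($u$ a single function, periodic in $x$). A local evolutionary vector field is $X=\sum_{s\ge0}\partial_x^s\xi\,\frac{\partial}{\partial u_{(s)}}$ with $\xi$ a differential polynomial in $u$. The Lie derivative of a local bivector with respect to $X$ is the Schouten bracket with $X$ (for $\omega_1=\delta'$ and $X$ with characteristic $\xi$, $\mathrm{Lie}_X\omega_1$ is the operator $-\xi_*\circ\partial_x-\partial_x\circ\xi_*^\dagger$, where $\xi_*=\sum_k\frac{\partial\xi}{\partial u_{(k)}}\partial_x^k$ is the Fréchet derivative and $\dagger$ the formal adjoint, with an operator $\sum_t a_t\partial_x^t$ identified with the bivector $\sum_t a_t\delta^{(t)}(x-y)$). Exactness of a pencil $\omega_2-\lambda\omega_1$: there is a vector field $X$ with $\mathrm{Lie}_X\omega_2=\omega_1\neq0$ and $\mathrm{Lie}_X\omega_1=0$. *)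

(* Defs.v *)
From Stdlib Require Import Reals List.
From Coquelicot Require Import Coquelicot.
Open Scope R_scope.

(** * Jet space of a scalar field u.
    A jet point [j : jet] assigns to each k the value of u_(k) (j 0 = u, j 1 = u_x, ...).
    A differential function is a real function on jet space. *)
Definition jet := nat -> R.
Definition dfun := jet -> R.

Definition pder (k : nat) (f : dfun) : dfun := fun j =>
  Derive (fun t => f (fun i => if Nat.eqb i k then j i + t else j i)) 0.

(** total x-derivative  d_x f = sum_k u_(k+1) df/du_(k)  (directional derivative
    along the shift direction of the jet) *)
Definition tder (f : dfun) : dfun := fun j =>
  Derive (fun t => f (fun i => j i + t * j (S i))) 0.

Fixpoint tder_n (n : nat) (f : dfun) : dfun :=
  match n with O => f | S n => tder (tder_n n f) end.

Definition smooth (f : R -> R) : Prop := forall n x, ex_derive (Derive_n f n) x.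

(** * Differential polynomials:  finite sums  c(u) * u_(1)^e1 * u_(2)^e2 * ...
    with smooth coefficients c; a term is a pair (c, [e1; e2; ...]). *)
Definition dpoly := list ((R -> R) * list nat).

Fixpoint monom_from (e : list nat) (k : nat) (j : jet) : R :=
  match e with nil => 1 | m :: e' => j k ^ m * monom_from e' (S k) j end.

Definition dp_eval (xi : dpoly) : dfun := fun j =>
  fold_right (fun p acc => fst p (j O) * monom_from (snd p) 1%nat j + acc) 0 xi.

Definition is_dpoly (xi : dpoly) : Prop := List.Forall (fun p => smooth (fst p)) xi.

Definition dp_order (xi : dpoly) : nat :=
  fold_right (fun p m => Nat.max (length (snd p)) m) O xi.

(** * Scalar differential operators  sum_t a_t d_x^t, stored as the list
    [a_0; a_1; ...] of coefficients; identified with the bivector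
    sum_t a_t delta^(t)(x-y). *)
Definition op := list dfun.
Definition coef (A : op) (t : nat) : dfun := nth t A (fun _ => 0).

Fixpoint rsum (n : nat) (f : nat -> R) : R :=
  match n with O => 0 | S n => rsum n f + f n end.

Fixpoint binom (n k : nat) : nat :=
  match n, k with
  | _, O => 1%nat
  | O, S _ => 0%nat
  | S n', S k' => (binom n' k' + binom n' k)%nat
  end.

Definition op_add (A B : op) : op :=
  map (fun s => fun j => coef A s j + coef B s j) (seq 0 (Nat.max (length A) (length B))).
Definition op_opp (A : op) : op := map (fun a => fun j => - a j) A.
Definition op_sub (A B : op) : op := op_add A (op_opp B).

(** composition:  a d^k o b d^l = sum_i C(k,i) a d_x^i(b) d^(k-i+l) *)
Definition op_comp (A B : op) : op :=
  map (fun s => fun j =>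
         rsum (length A) (fun k => rsum (length B) (fun l => rsum (S k) (fun i =>
           if Nat.eqb (k - i + l) s
           then INR (binom k i) * coef A k j * tder_n i (coef B l) j
           else 0))))
      (seq 0 (length A + length B)).

(** formal adjoint:  (sum_k a_k d^k)^dagger = sum_k (-d)^k o a_k *)
Definition op_adj (A : op) : op :=
  map (fun s => fun j =>
         rsum (length A) (fun k =>
           if Nat.leb s k
           then (-1) ^ k * INR (binom k s) * tder_n (k - s) (coef A k) j
           else 0))
      (seq 0 (length A)).

Definition frechet (xi : dpoly) : op :=
  map (fun k => pder k (dp_eval xi)) (seq 0 (S (dp_order xi))).

(** action of the evolutionary vector field X = sum_s d_x^s(xi) d/du_(s)
    on a differential function *)
Definition evder (xi : dpoly) (f : dfun) : dfun := fun j =>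
  Derive (fun t => f (fun k => j k + t * tder_n k (dp_eval xi) j)) 0.

(** Lie derivative of a local bivector P along X (Schouten bracket):
    Lie_X P = X(P) - xi_* o P - P o xi_*^dagger
    (for P = d_x this is  - xi_* o d_x - d_x o xi_*^dagger). *)
Definition lie (xi : dpoly) (P : op) : op :=
  op_sub (op_sub (map (evder xi) P) (op_comp (frechet xi) P))
         (op_comp P (op_adj (frechet xi))).

Definition op_eq (A B : op) : Prop := forall t j, coef A t j = coef B t j.

Definition omega1 : op := (fun _ => 0) :: (fun _ => 1) :: nil.

Definition omega2 (g : R -> R) : op :=
  (fun j => / 2 * Derive g (j O) * j 1%nat) :: (fun j => g (j O)) :: nil.

(* Main.v *)
Require Import Defs.
From Stdlib Require Import Reals List Lra Lia FunctionalExtensionality.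
From Coquelicot Require Import Coquelicot.
Open Scope R_scope.

Definition cj (u : R) : jet := fun i => match i with O => u | _ => 0 end.

Lemma coef_nil t j : coef nil t j = 0.
Proof. unfold coef; destruct t; reflexivity. Qed.

Lemma coef_over A s j : (length A <= s)%nat -> coef A s j = 0.
Proof. intros H; unfold coef; rewrite nth_overflow by exact H; reflexivity. Qed.

Lemma nth_map_seq (f : nat -> dfun) n s d : (s < n)%nat ->
  nth s (map f (seq 0 n)) d = f s.
Proof.
  intros H. rewrite nth_indep with (d' := f 0%nat) by (rewrite length_map, length_seq; lia).
  rewrite map_nth, seq_nth by exact H. reflexivity.
Qed.

Lemma coef_add A B s j : coef (op_add A B) s j = coef A s j + coef B s j.
Proof.
  destruct (Nat.lt_ge_cases s (Nat.max (length A) (length B))) as [H|H].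
  - unfold op_add. unfold coef at 1. rewrite nth_map_seq by exact H. reflexivity.
  - rewrite (coef_over A), (coef_over B) by lia.
    unfold coef, op_add. rewrite nth_overflow by (rewrite length_map, length_seq; lia). lra.
Qed.

Lemma coef_opp A s j : coef (op_opp A) s j = - coef A s j.
Proof.
  unfold coef, op_opp. revert s. induction A as [|a A IH]; intros [|s]; simpl; try ring.
  apply IH.
Qed.

Lemma coef_sub A B s j : coef (op_sub A B) s j = coef A s j - coef B s j.
Proof. unfold op_sub. rewrite coef_add, coef_opp. ring. Qed.

Lemma tder_cj f u : tder f (cj u) = 0.
Proof.
  unfold tder.
  rewrite (Derive_ext _ (fun _ => f (cj u))). apply Derive_const.
  intros t. f_equal. extensionality i. destruct i; simpl; ring.
Qed.

Lemma tder_n_cj n f u : tder_n (S n) f (cj u) = 0.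
Proof. simpl. apply tder_cj. Qed.

Lemma rsum_pad n N f : (forall i, (n <= i)%nat -> f i = 0) -> (n <= N)%nat ->
  rsum n f = rsum N f.
Proof.
  intros Hf HN. induction N.
  - replace n with 0%nat by lia. reflexivity.
  - destruct (Nat.eq_dec n (S N)) as [->|Hn]; [reflexivity|].
    simpl. rewrite <- IHN by lia. rewrite (Hf N) by lia. ring.
Qed.

Lemma rsum_trunc n m f : (forall i, (m <= i)%nat -> f i = 0) ->
  (forall i, (n <= i)%nat -> f i = 0) -> rsum n f = rsum m f.
Proof.
  intros Hm Hn. rewrite (rsum_pad n (Nat.max n m)) by (auto; lia).
  rewrite (rsum_pad m (Nat.max n m)) by (auto; lia). reflexivity.
Qed.

Lemma rsum_zero n f : (forall i, f i = 0) -> rsum n f = 0.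
Proof. intros H; induction n; simpl; [reflexivity|rewrite IHn, H; ring]. Qed.

Lemma comp_cj A B u : (1 < length A + length B)%nat ->
  coef (op_comp A B) 1 (cj u) =
  coef A 0 (cj u) * coef B 1 (cj u) + coef A 1 (cj u) * coef B 0 (cj u).
Proof.
  intros Hl. unfold op_comp. unfold coef at 1. rewrite nth_map_seq by exact Hl.
  set (G := fun k l => if Nat.eqb (k + l) 1 then coef A k (cj u) * coef B l (cj u) else 0).
  transitivity (rsum (length A) (fun k => rsum (length B) (fun l => G k l))).
  - f_equal. extensionality k. f_equal. extensionality l.
    rewrite (rsum_trunc (S k) 1).
    + simpl. rewrite Nat.sub_0_r. unfold G. destruct (Nat.eqb (k + l) 1); [|ring].
      assert (Hb : binom k 0 = 1%nat) by (destruct k; reflexivity).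
      rewrite Hb. simpl. ring.
    + intros i Hi. destruct i; [lia|]. rewrite tder_n_cj.
      destruct (Nat.eqb _ _); ring.
    + intros i Hi. destruct i; [lia|]. rewrite tder_n_cj.
      destruct (Nat.eqb _ _); ring.
  - rewrite (rsum_trunc (length A) 2).
    + assert (E0 : forall k, rsum (length B) (fun l => G k l) = rsum 2 (fun l => G k l)).
      { intros k. apply rsum_trunc.
        - intros i Hi. unfold G. destruct (Nat.eqb (k + i) 1) eqn:E; [apply Nat.eqb_eq in E; lia|ring].
        - intros i Hi. unfold G. rewrite (coef_over B i) by lia. destruct (Nat.eqb _ _); ring. }
      simpl. rewrite !E0. unfold G; simpl. ring.
    + intros k Hk. apply rsum_zero. intros l. unfold G.
      destruct (Nat.eqb (k + l) 1) eqn:E; [apply Nat.eqb_eq in E; lia|ring].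
    + intros k Hk. apply rsum_zero. intros l. unfold G. rewrite coef_over by lia.
      destruct (Nat.eqb _ _); ring.
Qed.

Lemma adj_cj A u : (0 < length A)%nat -> coef (op_adj A) 0 (cj u) = coef A 0 (cj u).
Proof.
  intros Hl. unfold op_adj. unfold coef at 1. rewrite nth_map_seq by exact Hl.
  rewrite (rsum_trunc _ 1).
  - simpl. ring.
  - intros i Hi. destruct i; [lia|]. simpl Nat.leb. cbv iota.
    rewrite Nat.sub_0_r. rewrite tder_n_cj. ring.
  - intros i Hi. destruct i; [lia|]. simpl Nat.leb. cbv iota.
    rewrite Nat.sub_0_r. rewrite tder_n_cj. ring.
Qed.

Lemma frechet_len xi : (0 < length (frechet xi))%nat.
Proof. unfold frechet. rewrite length_map, length_seq. lia. Qed.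

Lemma frechet0 xi u : coef (frechet xi) 0 (cj u) =
  Derive (fun t => dp_eval xi (cj (u + t))) 0.
Proof.
  unfold coef, frechet. rewrite nth_map_seq by lia. unfold pder.
  apply Derive_ext. intros t. f_equal. extensionality i. destruct i; reflexivity.
Qed.

Lemma lie_cj xi P u : length P = 2%nat -> coef P 0 (cj u) = 0 ->
  coef (lie xi P) 1 (cj u) =
  evder xi (coef P 1) (cj u) - 2 * coef P 1 (cj u) * coef (frechet xi) 0 (cj u).
Proof.
  intros HL H0. unfold lie. rewrite !coef_sub.
  rewrite comp_cj by (rewrite HL; lia). rewrite comp_cj by (rewrite HL; lia).
  rewrite H0, adj_cj by apply frechet_len.
  destruct P as [|p0 [|p1 [|]]]; try discriminate.
  change (coef (p0::p1::nil) 1) with p1.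
  change (coef (map (evder xi) (p0 :: p1 :: nil)) 1) with (evder xi p1). ring.
Qed.

Lemma const_of_deriv f : (forall x, is_derive f x 0) -> forall x, f x = f 0.
Proof.
  intros H x. destruct (Rtotal_order x 0) as [Hx|[->|Hx]].
  - apply eq_is_derive; auto.
  - reflexivity.
  - symmetry. apply eq_is_derive; auto.
Qed.

Theorem lemma15 (g : R -> R) (hg : smooth g) (xi : dpoly) (hxi : is_dpoly xi)
  (h1 : op_eq (lie xi omega1) nil)
  (h2 : op_eq (lie xi (omega2 g)) omega1) :
  exists a b : R, forall u : R, g u = a * u + b.
Proof.
  set (c := fun v => dp_eval xi (cj v)).
  set (D := Derive g).
  assert (Hg : forall x, ex_derive g x) by (intros x; exact (hg 0%nat x)).
  assert (HD : forall x, ex_derive D x) by (intros x; exact (hg 1%nat x)).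
  assert (F0 : forall u, Derive (fun t => c (u + t)) 0 = 0).
  { intros u. specialize (h1 1%nat (cj u)). rewrite coef_nil in h1.
    rewrite lie_cj in h1 by (reflexivity || (unfold coef, omega2, omega1; simpl; ring)).
    rewrite frechet0 in h1. change (coef omega1 1) with (fun _ : jet => 1) in h1.
    unfold evder in h1; cbv beta in h1. rewrite Derive_const in h1. unfold c. lra. }
  assert (HcD : forall u, c u * D u = 1).
  { intros u. specialize (h2 1%nat (cj u)).
    rewrite lie_cj in h2 by (reflexivity || (unfold coef, omega2, omega1; simpl; ring)).
    rewrite frechet0 in h2. pose proof (F0 u) as F0u; unfold c in F0u; rewrite F0u in h2.
    change (coef (omega2 g) 1) with (fun j : jet => g (j 0%nat)) in h2.
    change (coef omega1 1) with (fun _ : jet => 1) in h2.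
    unfold evder in h2; cbv beta in h2. simpl in h2. set (cu := dp_eval xi (cj u)) in h2. change (c u) with cu.
    rewrite (Derive_comp g (fun t => u + t * cu)) in h2.
    - replace (u + 0 * cu) with u in h2 by ring.
      assert (E : Derive (fun t => u + t * cu) 0 = cu).
      { apply is_derive_unique. auto_derive; auto; ring. }
      rewrite E in h2. fold D in h2. lra.
    - apply Hg.
    - auto_derive; auto. }
  assert (HDnz : forall u, D u <> 0).
  { intros u Hu. specialize (HcD u). rewrite Hu in HcD. lra. }
  assert (Hc : forall u, c u = / D u).
  { intros u. specialize (HcD u). specialize (HDnz u). apply (Rmult_eq_reg_r (D u)); auto. rewrite Rinv_l by auto. exact HcD. }
  assert (HDD : forall u, Derive D u = 0).
  { intros u. specialize (F0 u).
    rewrite (Derive_ext _ (fun t => / D (u + t))) in F0 by (intros; apply Hc).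
    rewrite (Derive_comp (fun y => / D y) (fun t => u + t)) in F0.
    - rewrite Derive_inv in F0 by (auto; replace (u+0) with u by ring; auto).
      assert (E : Derive (fun t => u + t) 0 = 1).
      { apply is_derive_unique. auto_derive; auto; ring. }
      rewrite E in F0.
      replace (u + 0) with u in F0 by ring.
      specialize (HDnz u).
      assert (Hp : D u ^ 2 <> 0) by (apply pow_nonzero; auto).
      apply (Rmult_eq_reg_r (/ D u ^ 2)); [|apply Rinv_neq_0_compat; auto].
      unfold Rdiv in F0. lra.
    - apply ex_derive_inv; auto.
    - auto_derive; auto. }
  assert (Dconst : forall x, D x = D 0).
  { apply const_of_deriv. intros x. rewrite <- (HDD x). apply Derive_correct. auto. }
  exists (D 0), (g 0). intros u.
  assert (H : forall x, (fun y => g y - D 0 * y) x = (fun y => g y - D 0 * y) 0).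
  { apply const_of_deriv. intros x.
    auto_derive; [apply Hg|]. fold D. rewrite Dconst. ring. }
  simpl in H. specialize (H u). lra.
Qed.
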